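(* Let $A$ be a finite set and let $C, D \subseteq O_A$ be total clones with $D \subseteq C$ such that for some $a\in A$ the constant function $c_a$ (of some arity) belongs to $C$ but not to $D$. Then $|\mathcal{I}_{\mathrm{str}}(D)| \geq |\mathcal{I}_{\mathrm{str}}(C)|$.
   Context: A partial function of arity $n$ on $A$ is a map $f:\operatorname{dom} f\to A$ with $\operatorname{dom} f\subseteq A^n$; it is total if $\operatorname{dom} f=A^n$. $P_A$ is the set of all partial functions on $A$, $O_A$ the set of total ones. Composition $F=f(g_1,\dots,g_n)$ ($f$ $n$-ary, $g_i$ $m$-ary) is given by $F(\mathbf{x})=f(g_1(\mathbf{x}),\dots,g_n(\mathbf{x}))$ on $\operatorname{dom} F=\{\mathbf{x}\in\bigcap_i\operatorname{dom} g_i : (g_1(\mathbf{x}),\dots,g_n(\mathbf{x}))\in\operatorname{dom} f\}$. A partial clone is a composition-closed subset of $P_A$ containing all projections; a total clone is one contained in $O_A$. A partial clone $X$ is strong if whenever $g\in X$ and $f$ is a restriction of $g$ ($\operatorname{dom} f\subseteq\operatorname{dom} g$, $f=g$ on $\operatorname{dom} f$) then $f\in X$. For a total clone $C$, $\mathcal{I}_{\mathrm{str}}(C)$ is the set of all strong partial clones $X\subseteq P_A$ with $X\cap O_A=C$. $c_a$ denotes the constant total function with value $a$. *)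

(* Defs.v *)
From mathcomp Require Import all_boot.
Set Implicit Arguments. Unset Strict Implicit. Unset Printing Implicit Defensive.

Section PartialFunctions.
Variable A : finType.

(* An n.+1-ary partial function on A: arguments are tuples x : 'I_n.+1 -> A
   (as finite functions); the value is None exactly outside the domain. *)
Definition pfn (n : nat) := {ffun 'I_n.+1 -> A} -> option A.

Definition PF := {n : nat & pfn n}.

Definition mkPF (n : nat) (f : pfn n) : PF := existT pfn n f.

Definition arity (h : PF) : nat := projT1 h.

Definition total (h : PF) : Prop := forall x, projT2 h x <> None.

Definition pcomp (n m : nat) (f : pfn n) (gs : 'I_n.+1 -> pfn m) : pfn m :=
  fun x =>
    match gs ord0 x with
    | None => None
    | Some a0 =>
        if [forall i, gs i x != None]
        then f [ffun i => odflt a0 (gs i x)]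
        else None
    end.

Definition proj (n : nat) (i : 'I_n.+1) : pfn n := fun x => Some (x i).

Definition cst (n : nat) (a : A) : pfn n := fun _ => Some a.

Definition restriction (n : nat) (f g : pfn n) : Prop :=
  forall x y, f x = Some y -> g x = Some y.

Definition partial_clone (X : PF -> Prop) : Prop :=
  (forall n (i : 'I_n.+1), X (mkPF (proj i))) /\
  (forall n m (f : pfn n) (gs : 'I_n.+1 -> pfn m),
      X (mkPF f) -> (forall i, X (mkPF (gs i))) -> X (mkPF (pcomp f gs))).

Definition total_clone (C : PF -> Prop) : Prop :=
  partial_clone C /\ (forall h, C h -> total h).

Definition strong_partial_clone (X : PF -> Prop) : Prop :=
  partial_clone X /\
  (forall n (f g : pfn n), X (mkPF g) -> restriction f g -> X (mkPF f)).

Definition Istr (C : PF -> Prop) (X : PF -> Prop) : Prop :=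
  strong_partial_clone X /\ (forall h, (X h /\ total h) <-> C h).

End PartialFunctions.

(* |S| <= |T| for families of sets: there is an injection from S into T *)
Definition card_le (U : Type) (S T : U -> Prop) : Prop :=
  exists phi : U -> U,
    (forall X, S X -> T (phi X)) /\
    (forall X Y, S X -> S Y -> phi X = phi Y -> X = Y).

(* Main.v *)
Require Import Defs.
From mathcomp Require Import all_boot.
From Stdlib Require Import FunctionalExtensionality PropExtensionality.

Set Implicit Arguments. Unset Strict Implicit. Unset Printing Implicit Defensive.
Local Notation pcomp := Defs.pcomp.
Local Notation proj := Defs.proj.
Local Notation cst := Defs.cst.

Lemma pcomp_total_inner (A : finType) n m (f : pfn A n) (gs : 'I_n.+1 -> pfn A m) (x : {ffun 'I_m.+1 -> A}) (j : 'I_n.+1) :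
  pcomp f gs x <> None -> gs j x <> None.
Proof.
rewrite /pcomp; case E: (gs ord0 x) => [a0|] //.
case: ifP => // /forallP H _; move: (H j) => /eqP; done.
Qed.

Lemma pcompA (A : finType) n k m (f : pfn A n) (hs : 'I_n.+1 -> pfn A k)
  (gs : 'I_k.+1 -> pfn A m) (x : {ffun 'I_m.+1 -> A}) :
  pcomp (pcomp f hs) gs x = pcomp f (fun j => pcomp (hs j) gs) x.
Proof.
rewrite /pcomp; case E: (gs ord0 x) => [a0|] //=.
by case Hall: [forall i, gs i x != None].
Qed.

Lemma pcomp_restr (A : finType) n m (f g : pfn A n) (gs : 'I_n.+1 -> pfn A m) :
  restriction f g -> restriction (pcomp f gs) (pcomp g gs).
Proof.
move=> Hfg x y; rewrite /pcomp; case: (gs ord0 x) => [a0|] //.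
case: ifP => // _; exact: Hfg.
Qed.

Lemma total_restr_eq (A : finType) n (f g : pfn A n) :
  restriction f g -> (forall x, f x <> None) -> f = g.
Proof.
move=> H Ht; apply: functional_extensionality => x.
case E: (f x) => [b|]; first by rewrite (H x b E).
by exfalso; exact: Ht x E.
Qed.

Lemma pcomp_proj (A : finType) n (f : pfn A n) : pcomp f (@proj A n) = f.
Proof.
apply: functional_extensionality => x; rewrite /pcomp /proj.
have -> : [forall i, Some (x i) != None] = true by apply/forallP.
by congr f; apply/ffunP => i; rewrite ffunE.
Qed.

Lemma cst_change (A : finType) m k (a : A) :
  @cst A m a = pcomp (@cst A k a) (fun _ => @proj A m ord0).
Proof.
apply: functional_extensionality => x; rewrite /pcomp /proj /cst.
by have -> : [forall i : 'I_k.+1, Some (x ord0) != None] = true by apply/forallP.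
Qed.

Definition fplus (A : finType) n (f : pfn A n) (a : A) : pfn A n.+1 :=
  fun x => if x ord_max == a then f [ffun i : 'I_n.+1 => x (widen_ord (leqnSn _) i)]
           else None.

Lemma fplus_restr (A : finType) n (f : pfn A n) a :
  restriction (fplus f a) (pcomp f (fun i => @proj A n.+1 (widen_ord (leqnSn _) i))).
Proof.
move=> x y; rewrite /fplus /pcomp /proj; case: ifP => // _.
have -> : [forall i : 'I_n.+1, Some (x (widen_ord (leqnSn n.+1) i)) != None] = true
  by apply/forallP.
move=> <-; congr f; apply/ffunP => i; rewrite !ffunE //.
Qed.

Lemma fplus_last (A : finType) n m (f : pfn A n) a (hs : 'I_n.+2 -> pfn A m) (x : {ffun 'I_m.+1 -> A}) :
  pcomp (fplus f a) hs x <> None -> hs ord_max x = Some a.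
Proof.
rewrite /pcomp; case: (hs ord0 x) => [a0|] //; case: ifP => // /forallP Hall.
rewrite /fplus ffunE; case: eqP => // Heq _.
move: (Hall ord_max) Heq; case: (hs ord_max x) => //= b _ ->; done.
Qed.

Definition gsrec (A : finType) n (a : A) : 'I_n.+2 -> pfn A n :=
  fun i => if (i < n.+1)%N then @proj A n (inord i) else @cst A n a.

Lemma fplus_recover (A : finType) n (f : pfn A n) a :
  pcomp (fplus f a) (gsrec a) = f.
Proof.
apply: functional_extensionality => x; rewrite /pcomp.
have -> : gsrec a ord0 x = Some (x (inord 0)) by [].
have -> : [forall i, gsrec a i x != None] = true.
  by apply/forallP => i; rewrite /gsrec; case: ifP.
rewrite /fplus ffunE /gsrec /= ltnn eqxx.
congr f; apply/ffunP => i; rewrite !ffunE /= ltn_ord /proj /=.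
by rewrite inord_val.
Qed.

Definition phi (A : finType) (D : PF A -> Prop) (X : PF A -> Prop) : PF A -> Prop :=
  fun h => X h /\ forall m (gs : 'I_(arity h).+1 -> pfn A m),
    (forall i, D (mkPF (gs i))) -> (forall x, pcomp (projT2 h) gs x <> None) ->
    D (mkPF (pcomp (projT2 h) gs)).

Theorem mainTheorem10 (A : finType) (C D : PF A -> Prop) :
  total_clone C -> total_clone D ->
  (forall h, D h -> C h) ->
  (exists (a : A) (n : nat), C (mkPF (@cst A n a)) /\ ~ D (mkPF (@cst A n a))) ->
  card_le (Istr C) (Istr D).
Proof.
move=> [[HCp HCc] HCt] [[HDp HDc] HDt] DC [a [k [Cak nDak]]].
have Ca m : C (mkPF (@cst A m a)).
  by rewrite (cst_change m k a); apply HCc => // i; apply HCp.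
have nDa m : ~ D (mkPF (@cst A m a)).
  move=> Dm; apply nDak; rewrite (cst_change k m a); apply HDc => // i; apply HDp.
have sub : forall X Y, Istr C X -> Istr C Y -> phi D X = phi D Y -> forall h, X h -> Y h.
  move=> X Y [[[HXp HXc] HXs] HXC] [[[HYp HYc] HYs] HYC] Heq [n f] Xf.
  have Xp : X (mkPF (fplus f a)).
    apply: (HXs _ _ (pcomp f (fun i => @proj A n.+1 (widen_ord (leqnSn _) i)))).
      by apply HXc => // i; apply HXp.
    exact: fplus_restr.
  have Pp : phi D X (mkPF (fplus f a)).
    split => // m hs HD Ht; exfalso; apply (nDa m).
    have -> : @cst A m a = hs ord_max.
      by apply: functional_extensionality => x; symmetry; apply: fplus_last (Ht x).
    exact: HD.
  rewrite Heq in Pp; case: Pp => Yp _.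
  rewrite -(fplus_recover f a); apply HYc => // i.
  rewrite /gsrec; case: ifP => _; first by apply HYp.
  by apply (proj1 ((HYC _).2 (Ca n))).
exists (phi D); split.
- move=> X [[[HXp HXc] HXs] HXC]; split; [split; [split|]|].
  + move=> n i; split; first by apply HXp.
    move=> m gs HD Ht /=.
    have -> : pcomp (proj i) gs = gs i; last exact: HD.
    apply: functional_extensionality => x; move: (Ht x); rewrite /pcomp /proj.
    case E: (gs ord0 x) => [a0|] //; case: ifP => // /forallP H _; rewrite /= ffunE.
    by move: (H i); case: (gs i x).
  + move=> n m f hs [Xf Cf] Hhs; split.
      by apply HXc => // i; exact (proj1 (Hhs i)).
    move=> p gs HD Ht /=.
    have E : pcomp (pcomp f hs) gs = pcomp f (fun j => pcomp (hs j) gs).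
      by apply: functional_extensionality => x; apply pcompA.
    rewrite E; rewrite /= E in Ht.
    apply Cf => [j|x]; last exact: Ht x.
    apply (proj2 (Hhs j)) => // x; exact: pcomp_total_inner (Ht x).
  + move=> n f g [Xg Cg] Hr; split; first exact: HXs Xg Hr.
    move=> m gs HD Ht /=.
    simpl in Ht, gs; have E := total_restr_eq (pcomp_restr (gs:=gs) Hr) Ht.
    rewrite E; apply Cg => // x; rewrite -E; exact: Ht.
  + move=> [n f]; split.
    * move=> [[_ Cf] Ht]; rewrite -(pcomp_proj f); apply Cf => [i|x].
        by apply HDp.
      by rewrite pcomp_proj; exact: Ht x.
    * move=> Dh; split; last exact: HDt.
      split; first exact: (proj1 ((HXC _).2 (DC _ Dh))).
      by move=> m gs HD Ht; apply HDc.
- move=> X Y IX IY Heq; apply: functional_extensionality => h.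
  apply: propositional_extensionality; split; [apply: sub| apply: sub] => //.
Qed.
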